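(* In $\mathbf H^{\mathrm{gr}}_N[c_1,\dots,c_{l-1}]$, for each $i=1,\dots,N$, $$\prod_{k=1}^{l}\Big(w_i-\hbar-z_k+\mathbf t\sum_{j>i}s_{ij}\Big)=\sum_{p=0}^{l}\mathbf t^p\sum_{0=k_0<k_1<\dots<k_p\le l}\ \sum_{i=i_0<i_1<\dots<i_p\le N}\ \prod_{r=0}^{p}\ \prod_{k=k_r+1}^{k_{r+1}-1}(w_{i_r}-\hbar-z_k)\cdot s_{i_{p-1},i_p}s_{i_{p-2},i_{p-1}}\cdots s_{i_1,i_2}s_{i_0,i_1},$$ where on the left the factors are multiplied in the order $k=1,\dots,l$ from left to right, on the right $k_{p+1}:=l+1$, and for $p=0$ the product of transpositions is $1$.
   Context: $\mathbf H^{\mathrm{gr}}_N$ is the $\mathbb C[\hbar,\mathbf t]$-algebra generated by $s_1,\dots,s_{N-1}$, $X_1^{\pm1},\dots,X_N^{\pm1}$, $w_1,\dots,w_N$ with relations: the $w_i$ commute pairwise, the $X_i$ commute pairwise, $X_iX_i^{-1}=X_i^{-1}X_i=1$; the $s_i$ satisfy the Coxeter relations of $\mathfrak S_N$ ($s_{ij}$ denotes the transposition $(ij)$); $s_iw_i=w_{i+1}s_i-\mathbf t$, $s_iw_{i+1}=w_is_i+\mathbf t$, $s_iw_j=w_js_i$ ($j\ne i,i+1$); $\sigma X_i^{\pm1}=X_{\sigma(i)}^{\pm1}\sigma$; $[w_i,X_j]=-\mathbf tX_js_{ji}$ ($i>j$), $-\mathbf tX_is_{ij}$ ($i<j$), $[w_i,X_i]=-\hbar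 X_i+\mathbf t\sum_{k<i}X_ks_{ki}+\mathbf t\sum_{k>i}X_is_{ik}$. $\mathbf H^{\mathrm{gr}}_N[c_1,\dots,c_{l-1}]$ is its extension of scalars by indeterminates $c_1,\dots,c_{l-1}$. Here $l\ge1$, $\varepsilon$ is a primitive $l$-th root of unity, and $z_k=-l^{-1}\big((l-k)\hbar+\sum_{m=1}^{l-1}(1+\varepsilon^m+\dots+\varepsilon^{(k-1)m})c_m\big)$ for $k=1,\dots,l$. *)

(* Defs.v *)
From HB Require Import structures.
From mathcomp Require Import all_boot all_order all_algebra all_fingroup.
From mathcomp Require Import Rstruct complex.
Set Implicit Arguments. Unset Strict Implicit. Unset Printing Implicit Defensive.
Import Order.TTheory GRing.Theory Num.Theory.
Local Open Scope ring_scope.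

Definition Cfield : fieldType := (Rdefinitions.R)[i].

Definition central (A : nzRingType) (x : A) := forall y : A, x * y = y * x.

(* Indices i = 1..N of the paper are encoded as ordinals i-1 : 'I_N.
   [rho] is the embedding of the group algebra C[S_N] into the algebra:
   rho sigma is the element sigma.  MathComp's product (s * t)%g of
   permutations is "first s, then t", i.e. the composite t o s; hence the
   multiplicativity hypothesis reads rho (s * t) = rho t * rho s, which means
   rho (sigma o tau) = rho sigma * rho tau.  In particular the simple
   reflections s_i = rho (tperm (i-1) i) satisfy the Coxeter relations of S_N,
   and s_{ij} = rho (tperm i j). *)
Definition Hgr_rels (A : algType Cfield) (N : nat) (hb t : A)
  (rho : {perm 'I_N} -> A) (X Xi w : 'I_N -> A) : Prop :=
  [/\
      rho 1%g = 1 /\ (forall s s' : {perm 'I_N}, rho (s * s')%g = rho s' * rho s),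
      (forall i j, w i * w j = w j * w i)
      /\ (forall i j, X i * X j = X j * X i)
      /\ (forall i, X i * Xi i = 1 /\ Xi i * X i = 1),
      (forall i j : 'I_N, val j = (val i).+1 ->
          rho (tperm i j) * w i = w j * rho (tperm i j) - t
       /\ rho (tperm i j) * w j = w i * rho (tperm i j) + t
       /\ (forall k, k != i -> k != j -> rho (tperm i j) * w k = w k * rho (tperm i j))),
      (forall (s : {perm 'I_N}) i, rho s * X i = X (s i) * rho s
                                 /\ rho s * Xi i = Xi (s i) * rho s) &
      (forall i j : 'I_N, (j < i)%N ->
          w i * X j - X j * w i = - (t * X j * rho (tperm j i)))
      /\ (forall i j : 'I_N, (i < j)%N ->
          w i * X j - X j * w i = - (t * X i * rho (tperm i j)))
      /\ (forall i : 'I_N,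
          w i * X i - X i * w i =
            - (hb * X i) + t * (\sum_(k : 'I_N | (k < i)%N) X k * rho (tperm k i))
                         + t * (\sum_(k : 'I_N | (i < k)%N) X i * rho (tperm i k)))].

Definition zk (A : algType Cfield) (l : nat) (eps : Cfield) (hb : A)
  (c : nat -> A) (k : nat) : A :=
  - ((l%:R : Cfield)^-1 *: ((l - k)%:R * hb
       + \sum_(1 <= m < l) (\sum_(j < k) eps ^+ (j * m)) *: c m)).

(* The summand of the right-hand side, for the chains
   0 = k_0 < k_1 < ... < k_p <= l  (k_r = val (ks`_(r-1)) + 1) and
   i = i_0 < i_1 < ... < i_p      (i_r = (i :: is)`_r):
   prod_{r=0}^{p} prod_{k=k_r+1}^{k_{r+1}-1} (w_{i_r} - hb - z_k)
     * s_{i_{p-1} i_p} ... s_{i_0 i_1},  with k_{p+1} = l+1. *)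
Definition rhs_term (A : algType Cfield) (N l : nat) (hb : A) (z : nat -> A)
  (rho : {perm 'I_N} -> A) (w : 'I_N -> A) (i : 'I_N) (p : nat)
  (ks : p.-tuple 'I_l) (is_ : p.-tuple 'I_N) : A :=
  let kk := 0%N :: rcons [seq (val k).+1 | k <- ks] l.+1 in
  let ii := i :: is_ in
  (\prod_(r < p.+1)
     \prod_((nth 0%N kk r).+1 <= k < nth 0%N kk r.+1) (w (nth i ii r) - hb - z k))
  * \prod_(r < p) rho (tperm (nth i ii (p - r.+1)) (nth i ii (p - r))).

(* Main.v *)
Require Import Defs.
From HB Require Import structures.
From mathcomp Require Import all_boot all_order all_algebra all_fingroup.
From mathcomp Require Import Rstruct complex zify.
Import GRing.Theory.
Local Open Scope ring_scope.

Lemma sum_tuple0 (R : nmodType) (T : finType) (F : 0.-tuple T -> R) :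
  \sum_(t : 0.-tuple T) F t = F [tuple].
Proof.
rewrite (eq_bigr (fun _ => F [tuple])) => [|t _]; last by rewrite tuple0.
by rewrite sumr_const card_tuple expn0.
Qed.

Lemma sum_tupleS (R : nmodType) (T : finType) q (F : q.+1.-tuple T -> R) :
  \sum_(t : q.+1.-tuple T) F t = \sum_(x : T) \sum_(t : q.-tuple T) F [tuple of x :: t].
Proof.
rewrite pair_big /=.
rewrite (reindex (fun p : T * q.-tuple T => [tuple of p.1 :: p.2])) //=.
exists (fun t => (thead t, [tuple of behead t])).
  by move=> [x u] _; rewrite theadE; congr pair; apply: val_inj.
by move=> u _; rewrite [RHS]tuple_eta.
Qed.

Lemma sum_tupleS_cond (R : nmodType) (T : finType) q (P : pred (q.+1.-tuple T))
   (F : q.+1.-tuple T -> R) :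
  \sum_(t | P t) F t
  = \sum_(x : T) \sum_(t : q.-tuple T | P [tuple of x :: t]) F [tuple of x :: t].
Proof.
rewrite big_mkcond sum_tupleS; apply: eq_bigr => x _; by rewrite [RHS]big_mkcond.
Qed.

Lemma sum_lift (R : nmodType) n p (G : p.-tuple 'I_n.+1 -> R) :
  \sum_(ks : p.-tuple 'I_n.+1 | all (fun k => k != ord0) ks) G ks
  = \sum_(ks : p.-tuple 'I_n) G (map_tuple (lift ord0) ks).
Proof.
elim: p G => [|p IH] G.
  rewrite big_mkcond !sum_tuple0 /=.
  by congr G; apply: val_inj.
rewrite (@sum_tupleS_cond _ _ _ (fun ks : p.+1.-tuple 'I_n.+1 => all (fun k => k != ord0) ks)).
rewrite big_ord_recl /= big1 ?add0r //.
rewrite sum_tupleS; apply: eq_bigr => x _; rewrite IH; apply: eq_bigr => u _.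
by congr G; apply: val_inj.
Qed.

Lemma prod_shift (R : pzSemiRingType) (F : nat -> R) a b :
  \prod_(a.+1 <= k < b.+1) F k = \prod_(a <= k < b) F k.+1.
Proof.
rewrite -addn1 big_addn subn1 /=.
by apply: eq_bigr => k _; rewrite addn1.
Qed.

Lemma prod_first (R : pzSemiRingType) (F : nat -> R) n : (0 < n)%N ->
  \prod_(1 <= k < n.+1) F k = F 1%N * \prod_(1 <= k < n) F k.+1.
Proof.
move=> n0; rewrite big_ltn ?ltnS // prod_shift //.
Qed.

Lemma nth_pos (l : nat) (u : seq 'I_l) n : (0 < n)%N ->
  (0 < nth 0 (rcons [seq (val k).+1 | k <- u] n) 0)%N.
Proof. by case: u. Qed.

Section Alg.
Variables (A : algType Cfield) (N : nat) (hb t : A) (rho : {perm 'I_N} -> A) (X Xi w : 'I_N -> A).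
Hypothesis H : Hgr_rels hb t rho X Xi w.
Hypothesis ht : central t.
Hypothesis hhb : central hb.

Definition SS (i : 'I_N) := \sum_(j : 'I_N | (i < j)%N) rho (tperm i j).
Definition MM (i : 'I_N) := w i + t * SS i.

Lemma rho1 : rho 1%g = 1.
Proof. by case: H => [[]]. Qed.
Lemma rhoM s s' : rho (s * s')%g = rho s' * rho s.
Proof. by case: H => [[_ ->]]. Qed.

Lemma rho_tt (a b : 'I_N) : rho (tperm a b) * rho (tperm a b) = 1.
Proof. by rewrite -rhoM tperm2 rho1. Qed.

Lemma rho_conj (a b c d : 'I_N) :
  rho (tperm c d) * rho (tperm a b) * rho (tperm c d)
  = rho (tperm (tperm c d a) (tperm c d b)).
Proof.
by rewrite -tpermJ conjgE tpermV !rhoM.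
Qed.

Lemma adj_rel (m m' : 'I_N) : val m' = (val m).+1 ->
   rho (tperm m m') * w m = w m' * rho (tperm m m') - t
/\ rho (tperm m m') * w m' = w m * rho (tperm m m') + t
/\ (forall k, k != m -> k != m' -> rho (tperm m m') * w k = w k * rho (tperm m m')).
Proof. by case: H => _ _ adj _ _; apply: adj. Qed.

Lemma A1 (m m' k : 'I_N) : val m' = (val m).+1 -> (k < m)%N ->
  rho (tperm m m') * MM k * rho (tperm m m') = MM k.
Proof.
move=> hm km; have [_ [_ hk]] := adj_rel _ _ hm.
have km1 : k != m by apply/eqP => e; rewrite e ltnn in km.
have km2 : k != m' by apply/eqP => e; rewrite e hm ltnNge leqnSn in km.
rewrite /MM mulrDr mulrDl hk // -mulrA rho_tt mulr1; congr (_ + _).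
rewrite mulrA -ht -!mulrA; congr (_ * _); rewrite mulrA.
rewrite /SS mulr_sumr mulr_suml.
have tk : tperm m m' k = k by rewrite tpermD // eq_sym.
under eq_bigr => j _ do rewrite rho_conj tk.
rewrite (reindex_inj (@perm_inj _ (tperm m m'))) /=.
under eq_bigr do rewrite tpermK.
apply: eq_bigl => j.
case: tpermP => [->|->|//].
all: by rewrite km hm ltnS ltnW.
Qed.

Lemma conj_t (a y : A) : a * (t * y) * a = t * (a * y * a).
Proof. by rewrite mulrA -ht -!mulrA. Qed.

Lemma A2 (m m' : 'I_N) : val m' = (val m).+1 ->
  rho (tperm m m') * MM m * rho (tperm m m') = MM m'.
Proof.
move=> hm; have [h1 _] := adj_rel _ _ hm.
rewrite /MM mulrDr mulrDl h1 mulrBl -(mulrA (w m')) rho_tt mulr1 conj_t.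
rewrite -addrA; congr (_ + _).
rewrite -mulrN -mulrDr; congr (_ * _).
rewrite /SS mulr_sumr mulr_suml.
under eq_bigr => j _ do rewrite rho_conj tpermL.
have mm' : (m < m')%N by rewrite hm.
rewrite (bigD1 m') //= tpermR tpermC addrA addNr add0r.
apply: eq_big => j.
  case: (eqVneq j m') => [->|ne]; first by rewrite ltnn andbF.
  rewrite andbT [in RHS]ltn_neqAle -hm.
  by rewrite (_ : (val m' != val j) = true) // (inj_eq val_inj) eq_sym.
move=> /andP[mj ne]; rewrite tpermD // eq_sym //.
by apply/eqP => e; move: mj; rewrite e ltnn.
Qed.

Lemma Kconj (i : 'I_N) : forall n (j : 'I_N), val j = (val i + n.+1)%N ->
  rho (tperm i j) * MM i * rho (tperm i j) = MM j.
Proof.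
elim=> [|n IH] j hj; first by apply: A2; rewrite hj addn1.
have hj0 : (val i + n.+1 < N)%N by have := ltn_ord j; rewrite hj; lia.
set j0 := Ordinal hj0.
have e1 : val j = (val j0).+1 by rewrite hj /= addnS.
have ij0 : (i < j0)%N by rewrite /=; lia.
have -> : tperm i j = (tperm i j0 ^ tperm j0 j)%g.
  rewrite tpermJ tpermL tpermD //.
  1,2: apply/eqP => /(congr1 val) /= e; move: ij0 e1; rewrite /= ?e; lia.
rewrite conjgE tpermV !rhoM.
have a1 := A1 _ _ _ e1 ij0.
set rs := rho (tperm j0 j); set rx := rho (tperm i j0).
have -> : rs * rx * rs * MM i * (rs * rx * rs) = rs * (rx * (rs * MM i * rs) * rx) * rs.
  by rewrite !mulrA.
by rewrite a1 IH // A2.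
Qed.

Lemma RT1 (z : nat -> A) l p (ks : p.-tuple 'I_l) (is_ : p.-tuple 'I_N) i :
  rhs_term hb z rho w i (map_tuple (lift ord0) ks) is_
  = (w i - hb - z 1%N) * rhs_term hb (fun k => z k.+1) rho w i ks is_.
Proof.
rewrite /rhs_term.
set s' := rcons [seq (val k).+1 | k <- ks] l.+1.
have E : rcons [seq (val k).+1 | k <- map_tuple (lift ord0) ks] l.+2 = map S s'.
  rewrite /s' map_rcons; congr rcons; rewrite /= -!map_comp.
  by apply: eq_map => k /=; congr _.+1; exact: lift0.
have sz : size s' = p.+1 by rewrite size_rcons size_map size_tuple.
rewrite E !big_ord_recl /= !mulrA; congr (_ * _).
rewrite (nth_map 0%N 0%N) ?sz // prod_first ?nth_pos //; congr (_ * _).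
apply: eq_bigr => r _; rewrite (_ : bump 0 r = r.+1) // add0n.
have h1 : (r < size s')%N by rewrite sz ltnS ltnW.
have h2 : (r.+1 < size s')%N by rewrite sz ltnS.
by rewrite (nth_map 0%N 0%N _ h1) (nth_map 0%N 0%N _ h2) prod_shift.
Qed.

Lemma RT2 (z : nat -> A) l q (ks : q.-tuple 'I_l) (is_ : q.-tuple 'I_N) i i1 :
  rhs_term hb z rho w i [tuple of ord0 :: map_tuple (lift ord0) ks] [tuple of i1 :: is_]
  = rhs_term hb (fun k => z k.+1) rho w i1 ks is_ * rho (tperm i i1).
Proof.
rewrite /rhs_term.
set s' := rcons [seq (val k).+1 | k <- ks] l.+1.
have E : rcons [seq (val k).+1 | k <- map_tuple (lift ord0) ks] l.+2 = map S s'.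
  rewrite /s' map_rcons; congr rcons; rewrite /= -!map_comp.
  by apply: eq_map => k /=; congr _.+1; exact: lift0.
have sz : size s' = q.+1 by rewrite size_rcons size_map size_tuple.
have szi : size (i1 :: is_) = q.+1 by rewrite /= size_tuple.
rewrite /= E big_ord_recl /= big_geq // mul1r.
rewrite -mulrA; congr (_ * _).
  apply: eq_bigr => r _; rewrite add0n.
  have hr : (r < size (i1 :: is_))%N by rewrite szi.
  rewrite (set_nth_default i1 i hr).
  have -> : nth 0%N (1%N :: [seq i.+1 | i <- s']) r = (nth 0%N (0%N :: s') r).+1.
    move: hr; case: r => [[|r] lr] hr //=.
    by rewrite (nth_map 0%N 0%N) // sz ltnW.
  rewrite (nth_map 0%N 0%N) ?sz // prod_shift //.
rewrite big_ord_recr /= subnn subSn // subnn; congr (_ * _).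
apply: eq_bigr => r _.
have hr1 : (q - r.+1 < size (i1 :: is_))%N by rewrite szi ltnS leq_subr.
have hr2 : (q - r < size (i1 :: is_))%N by rewrite szi ltnS leq_subr.
have rq : (r < q)%N := ltn_ord r.
rewrite (subSn rq) (subSn (ltnW rq)) /=.
by rewrite (set_nth_default i1 i hr1) (set_nth_default i1 i hr2).
Qed.

Definition TT (z : nat -> A) (l : nat) (i : 'I_N) (p : nat) : A :=
  \sum_(ks : p.-tuple 'I_l | sorted ltn [seq val k | k <- ks])
    \sum_(is_ : p.-tuple 'I_N | sorted ltn [seq val j | j <- i :: is_])
      rhs_term hb z rho w i ks is_.

Lemma TT0 z i p : TT z 0 i p.+1 = 0.
Proof. by rewrite /TT big_mkcond sum_tupleS big_ord0. Qed.

Lemma sorted_mapS (u : seq nat) : sorted ltn (map S u) = sorted ltn u.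
Proof. by case: u => //= a u; rewrite path_map. Qed.

Lemma val_lift_seq l (u : seq 'I_l) :
  [seq val k | k <- map (lift ord0) u] = map S [seq val k | k <- u].
Proof. by rewrite -!map_comp; apply: eq_map => k /=; exact: lift0. Qed.

Lemma TT_part1 z l i p :
  \sum_(ks : p.-tuple 'I_l.+1 | sorted ltn [seq val k | k <- ks] && all (fun k => k != ord0) ks)
    \sum_(is_ : p.-tuple 'I_N | sorted ltn [seq val j | j <- i :: is_])
      rhs_term hb z rho w i ks is_
  = (w i - hb - z 1%N) * TT (fun k => z k.+1) l i p.
Proof.
rewrite big_andbC big_mkcondr.
rewrite (@sum_lift _ _ _ (fun ks : p.-tuple 'I_l.+1 => if sorted ltn [seq val k | k <- ks] then
      \sum_(is_ : p.-tuple 'I_N | sorted ltn [seq val j | j <- i :: is_])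
      rhs_term hb z rho w i ks is_ else 0)).
rewrite /TT mulr_sumr [RHS]big_mkcond; apply: eq_bigr => ks _.
rewrite (_ : [seq val k | k <- map_tuple (lift ord0) ks] = map S [seq val k | k <- ks]);
  last exact: val_lift_seq.
rewrite sorted_mapS; case: ifP => _ //.
rewrite mulr_sumr; apply: eq_bigr => is_ _; exact: RT1.
Qed.

Lemma path_nz l (a : nat) (u0 : seq 'I_l.+1) :
  path ltn a [seq val k | k <- u0] -> all (fun k => k != ord0) u0.
Proof.
move/(order_path_min ltn_trans); rewrite all_map; apply: sub_all => k /=.
by case: k => [[|k] ?].
Qed.

Lemma all_pos_nz l (u0 : seq 'I_l.+1) :
  all (ltn 0) [seq val k | k <- u0] = all (fun k => k != ord0) u0.
Proof. by rewrite all_map; apply: eq_all => k /=; case: k => [[|k] ?]. Qed.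

Lemma TT_part2 z l i q :
  \sum_(ks : q.+1.-tuple 'I_l.+1 | sorted ltn [seq val k | k <- ks] && ~~ all (fun k => k != ord0) ks)
    \sum_(is_ : q.+1.-tuple 'I_N | sorted ltn [seq val j | j <- i :: is_])
      rhs_term hb z rho w i ks is_
  = \sum_(j : 'I_N | (i < j)%N) TT (fun k => z k.+1) l j q * rho (tperm i j).
Proof.
rewrite big_mkcond sum_tupleS big_ord_recl.
rewrite [X in _ + X]big1 ?addr0; last first.
  move=> x _; apply: big1 => u _ /=.
  by case: ifP => // /andP [/path_nz ->].
have Ec : forall u0 : q.-tuple 'I_l.+1,
  (sorted ltn [seq val k | k <- [tuple of ord0 :: u0]] && ~~ all (fun k => k != ord0) [tuple of ord0 :: u0])
  = all (fun k => k != ord0) u0 && sorted ltn [seq val k | k <- u0].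
  by move=> u0 /=; rewrite (path_sortedE ltn_trans) all_pos_nz andbT.
under eq_bigr => u0 _ do rewrite Ec.
rewrite -big_mkcond big_mkcondr.
rewrite (@sum_lift _ _ _ (fun u0 : q.-tuple 'I_l.+1 => if sorted ltn [seq val k | k <- u0] then
   \sum_(is_ : q.+1.-tuple 'I_N | path ltn (val i) [seq val j | j <- is_])
      rhs_term hb z rho w i [tuple of ord0 :: u0] is_ else 0)).
transitivity (\sum_(ks : q.-tuple 'I_l | sorted ltn [seq val k | k <- ks])
   \sum_(j : 'I_N | (i < j)%N) \sum_(is' : q.-tuple 'I_N | sorted ltn [seq val j | j <- j :: is'])
      rhs_term hb (fun k => z k.+1) rho w j ks is' * rho (tperm i j)).
  rewrite [RHS]big_mkcond; apply: eq_bigr => ks _.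
  rewrite (_ : [seq val k | k <- map_tuple (lift ord0) ks] = map S [seq val k | k <- ks]);
    last exact: val_lift_seq.
  rewrite sorted_mapS; case: ifP => // _.
  rewrite (@sum_tupleS_cond _ _ _ (fun is_ : q.+1.-tuple 'I_N => path ltn (val i) [seq val j | j <- is_])).
  rewrite [RHS]big_mkcond; apply: eq_bigr => i1 _ /=.
  case: ifP => hi1.
    by apply: eq_bigr => is' _; rewrite RT2.
  by rewrite big_pred0 // => is' /=; rewrite hi1.
rewrite exchange_big; apply: eq_bigr => j _.
rewrite /TT mulr_suml; apply: eq_bigr => ks _; rewrite mulr_suml //.
Qed.

Lemma TTrec z l i p : TT z l.+1 i p = (w i - hb - z 1%N) * TT (fun k => z k.+1) l i p
  + (if p is q.+1 then \sum_(j : 'I_N | (i < j)%N) TT (fun k => z k.+1) l j q * rho (tperm i j) else 0).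
Proof.
rewrite {1}/TT (bigID (fun ks : p.-tuple 'I_l.+1 => all (fun k => k != ord0) ks)) /= TT_part1.
case: p => [|q]; last by rewrite TT_part2.
rewrite big_pred0 ?addr0 // => ks; by rewrite tuple0.
Qed.

Lemma TTzero l : forall z i p, (l < p)%N -> TT z l i p = 0.
Proof.
elim: l => [|l IH] z i [|p] // hp; first exact: TT0.
have hp' : (l < p)%N by [].
rewrite TTrec IH ?mulr0 ?add0r; last exact: ltnW.
by apply: big1 => j _; rewrite IH ?mul0r.
Qed.

Lemma Kcomm (i j : 'I_N) : (i < j)%N -> rho (tperm i j) * MM i = MM j * rho (tperm i j).
Proof.
move=> ij; have hj : val j = (val i + (val j - val i).-1.+1)%N.
  by rewrite prednK ?subn_gt0 // subnKC // ltnW.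
by rewrite -(Kconj _ _ _ hj) -!mulrA rho_tt mulr1.
Qed.

Lemma Kprod (c : nat -> A) (hc : forall k, central (c k)) (i j : 'I_N) :
  (i < j)%N -> forall n,
  rho (tperm i j) * \prod_(k < n) (MM i + c k) = \prod_(k < n) (MM j + c k) * rho (tperm i j).
Proof.
move=> ij; elim=> [|n IH]; first by rewrite !big_ord0 mul1r mulr1.
rewrite !big_ord_recr /= mulrA IH -!mulrA; congr (_ * _).
by rewrite mulrDr mulrDl Kcomm // hc.
Qed.

Lemma centralX n : central (t ^+ n).
Proof.
elim: n => [|n IHn] y; first by rewrite expr0 mul1r mulr1.
by rewrite exprS -mulrA IHn mulrA ht mulrA.
Qed.

Lemma rearr (a b c d : A) : a - b - c + d = (a + d) + (- b - c).
Proof. by rewrite -!addrA; congr (_ + _); rewrite addrA addrC. Qed.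

Lemma MainGen l : forall (z : nat -> A), (forall k, central (z k)) -> forall i,
  \prod_(k < l) (w i - hb - z k.+1 + t * SS i)
  = \sum_(p < l.+1) t ^+ p * TT z l i p.
Proof.
elim: l => [|l IH] z hz i.
  rewrite big_ord0 big_ord1 expr0 mul1r /TT big_mkcond sum_tuple0 /= big_mkcond sum_tuple0 /=.
  by rewrite /rhs_term big_ord1 big_ord0 /= big_geq // mulr1.
set z' := fun k => z k.+1.
have hz' : forall k, central (z' k) by move=> k; exact: hz.
have hc : forall k, central (- hb - z' k.+1).
  by move=> k y; rewrite mulrBl mulrBr mulNr mulrN hhb hz'.
rewrite big_ord_recl.
have EP j : \prod_(k < l) (w j - hb - z (lift ord0 k).+1 + t * SS j)
   = \prod_(k < l) (w j - hb - z' k.+1 + t * SS j).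
  by apply: eq_bigr => k _; rewrite lift0.
have EM j : \prod_(k < l) (w j - hb - z' k.+1 + t * SS j)
   = \prod_(k < l) (MM j + (- hb - z' k.+1)).
  by apply: eq_bigr => k _; rewrite rearr.
rewrite EP mulrDl -mulrA.
have ES : SS i * \prod_(k < l) (w i - hb - z' k.+1 + t * SS i)
  = \sum_(j : 'I_N | (i < j)%N) (\sum_(p < l.+1) t ^+ p * TT z' l j p) * rho (tperm i j).
  rewrite /SS mulr_suml; apply: eq_bigr => j ij.
  by rewrite EM (Kprod _ hc _ _ ij) -EM IH.
rewrite ES IH //.
have E1 : \sum_(p < l.+1) t ^+ p * TT z' l i p
   = TT z' l i 0 + \sum_(q < l.+1) t ^+ q.+1 * TT z' l i q.+1.
  have E0 : \sum_(p < l.+2) t ^+ p * TT z' l i p = \sum_(p < l.+1) t ^+ p * TT z' l i p.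
    by rewrite big_ord_recr /= (TTzero l z' i l.+1 (ltnSn l)) mulr0 addr0.
  rewrite -E0 big_ord_recl expr0 mul1r.
  by congr (_ + _); apply: eq_bigr => q _; rewrite lift0.
have E2 : t * \sum_(j : 'I_N | (i < j)%N) (\sum_(p < l.+1) t ^+ p * TT z' l j p) * rho (tperm i j)
   = \sum_(q < l.+1) t ^+ q.+1 * \sum_(j : 'I_N | (i < j)%N) TT z' l j q * rho (tperm i j).
  rewrite mulr_sumr; under eq_bigr do rewrite mulr_suml mulr_sumr.
  rewrite exchange_big; apply: eq_bigr => q _; rewrite mulr_sumr; apply: eq_bigr => j _.
  by rewrite exprS !mulrA.
rewrite E1 E2 mulrDr.
rewrite [RHS]big_ord_recl expr0 mul1r (TTrec z l i 0) addr0.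
under [in RHS]eq_bigr => q _ do rewrite lift0 TTrec.
rewrite -addrA; congr (_ + _); rewrite mulr_sumr -big_split; apply: eq_bigr => q _ /=.
by rewrite mulrDr; congr (_ + _); rewrite mulrA -centralX mulrA.
Qed.

End Alg.

Lemma zk_central (A : algType Cfield) (l : nat) (eps : Cfield) (hb : A) (c : nat -> A)
  (hhb : central hb) (hc : forall m, central (c m)) k : central (zk l eps hb c k).
Proof.
move=> y; rewrite /zk mulNr mulrN -scalerAl -scalerAr; congr (- (_ *: _)).
rewrite mulrDl mulrDr; congr (_ + _).
  by rewrite -mulrA hhb !mulrA mulr_natl mulr_natr.
rewrite mulr_suml mulr_sumr; apply: eq_bigr => m _.
by rewrite -scalerAl -scalerAr hc.
Qed.

Theorem lemma5p4 (A : algType Cfield) (N l : nat) (hl : (0 < l)%N)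
  (eps : Cfield) (heps : l.-primitive_root eps)
  (hb t : A) (c : nat -> A)
  (hhb : central hb) (ht : central t) (hc : forall m, central (c m))
  (rho : {perm 'I_N} -> A) (X Xi w : 'I_N -> A)
  (H : Hgr_rels hb t rho X Xi w) (i : 'I_N) :
  let z := zk l eps hb c in
  \prod_(k < l) (w i - hb - z k.+1 + t * \sum_(j : 'I_N | (i < j)%N) rho (tperm i j))
  = \sum_(p < l.+1) t ^+ p *
      \sum_(ks : p.-tuple 'I_l | sorted ltn [seq val k | k <- ks])
        \sum_(is_ : p.-tuple 'I_N | sorted ltn [seq val j | j <- i :: is_])
          rhs_term hb z rho w i ks is_.
Proof.
move=> z.
exact: (MainGen _ _ _ _ _ _ _ _ H ht hhb l _ (zk_central _ l eps _ _ hhb hc) i).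
Qed.
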